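(* Let $\mathcal{G}$ be a multi-layer graph with $l$ layers, $d,k\in\mathbb{N}$ with $k\ge1$, and $\mathcal{R}$ a collection of exactly $k$ subsets of $V(\mathcal{G})$. Let $L\subseteq\{1,\dots,l\}$ and $j\in\{1,\dots,l\}$ with $j>\max(L)$. If $|C^d_L(\mathcal{G})\cap C^d(G_j)|<\frac1k|\mathsf{Cov}(\mathcal{R})|+|\Delta(\mathcal{R},C^*(\mathcal{R}))|$, then $|\mathsf{Cov}((\mathcal{R}-\{C^*(\mathcal{R})\})\cup\{C^d_{L\cup\{j\}}(\mathcal{G})\})|<(1+\frac1k)|\mathsf{Cov}(\mathcal{R})|$.
   Context: A multi-layer graph $\mathcal{G}=(V,E_1,\dots,E_l)$ consists of a finite vertex set $V$ and edge sets $E_i$ of simple undirected graphs $G_i=(V,E_i)$. A graph is $d$-dense if every vertex has degree at least $d$; the $d$-coherent core $C^d_L(\mathcal{G})$ is the unique maximal $S\subseteq V$ such that the induced subgraph $G_i[S]$ is $d$-dense for all $i\in L$ (with $C^d_\emptyset(\mathcal{G})=V$). $C^d(G_j)$ is the $d$-core of $G_j$, i.e., the maximal $S$ with $G_j[S]$ $d$-dense (equal to $C^d_{\{j\}}(\mathcal{G})$). $\max(\emptyset)=-\infty$. For a collection $\mathcal{R}$ of sets, $\mathsf{Cov}(\mathcal{R})=\bigcup_{R\in\mathcal{R}}R$; for $C'\in\mathcal{R}$, $\Delta(\mathcal{R},C')=C'-\mathsf{Cov}(\mathcal{R}-\{C'\})$; $C^*(\mathcal{R})$ is a fixed element of $\mathcal{R}$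 minimizing $|\Delta(\mathcal{R},C')|$. *)

(* Defs.v *)
From mathcomp Require Import all_boot all_order all_algebra.
Set Implicit Arguments. Unset Strict Implicit. Unset Printing Implicit Defensive.

Definition simple_graph (T : finType) (e : rel T) : Prop :=
  symmetric e /\ irreflexive e.

Definition d_dense (T : finType) (d : nat) (e : rel T) (S : {set T}) : bool :=
  [forall x in S, d <= #|[set y in S | e x y]|].

(* d-coherent core C^d_L of the multi-layer graph G (layers indexed by 'I_l):
   the maximal S such that G_i[S] is d-dense for all i in L.  Since d-density
   is preserved under unions, the maximal such set is the union of all of them. *)
Definition coherent_core (T : finType) (l : nat) (G : 'I_l -> rel T)
  (d : nat) (L : {set 'I_l}) : {set T} :=
  \bigcup_(S : {set T} | [forall i in L, d_dense d (G i) S]) S.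

Definition d_core (T : finType) (l : nat) (G : 'I_l -> rel T) (d : nat)
  (j : 'I_l) : {set T} := coherent_core G d [set j].

Definition Cov (T : finType) (R : {set {set T}}) : {set T} :=
  \bigcup_(C in R) C.

Definition Delta (T : finType) (R : {set {set T}}) (C : {set T}) : {set T} :=
  C :\: Cov (R :\ C).

(* Main.v *)
Require Import Defs.
From mathcomp Require Import all_boot all_order all_algebra.
From mathcomp Require Import ring lra zify.
Import Order.TTheory GRing.Theory Num.Theory.
Local Open Scope ring_scope.

Theorem lemma3 (T : finType) (l : nat) (G : 'I_l -> rel T)
  (HG : forall i, simple_graph (G i))
  (d k : nat) (hk : (1 <= k)%N)
  (R : {set {set T}}) (hR : #|R| = k)
  (Cstar : {set T}) (hCin : Cstar \in R)
  (hCmin : forall C', C' \in R -> (#|Delta R Cstar| <= #|Delta R C'|)%N)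
  (L : {set 'I_l}) (j : 'I_l) (hj : forall i, i \in L -> (i < j)%N)
  (H : (#|coherent_core G d L :&: d_core G d j|%:R : rat)
         < (#|Cov R|%:R / k%:R) + #|Delta R Cstar|%:R) :
  (#|Cov ((R :\ Cstar) :|: [set coherent_core G d (j |: L)])|%:R : rat)
    < (1 + 1 / k%:R) * #|Cov R|%:R.
Proof.
set X := coherent_core G d (j |: L).
set A := Cov (R :\ Cstar).
have hX : X \subset coherent_core G d L :&: d_core G d j.
  apply/subsetP => x /bigcupP [S hS xS].
  rewrite inE; apply/andP; split; apply/bigcupP; exists S => //.
  - apply/forallP => i; apply/implyP => iL.
    by move/forallP: hS => /(_ i) /implyP; apply; rewrite !inE iL orbT.
  - apply/forallP => i; apply/implyP; rewrite inE => /eqP ->.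
    by move/forallP: hS => /(_ j) /implyP; apply; rewrite !inE eqxx.
have hcov : Cov ((R :\ Cstar) :|: [set X]) = A :|: X.
  rewrite /Cov bigcup_setU big_set1 //.
have hCR : Cov R = A :|: Cstar.
  by rewrite /Cov (bigD1 Cstar) //= setUC; congr (_ :|: _); apply: eq_bigl => C; rewrite !inE andbC.
have hD : (#|A| + #|Delta R Cstar| = #|Cov R|)%N.
  rewrite hCR /Delta -/A cardsU cardsD setIC.
  have := subset_leq_card (subsetIl Cstar A).
  have := subset_leq_card (subsetIl A Cstar). rewrite setIC. lia.
have hn : (#|A :|: X| <= #|A| + #|X|)%N by rewrite cardsU; lia.
have hx := subset_leq_card hX.
rewrite hcov.
have hk0 : (0 : rat) < k%:R by rewrite ltr0n.
have e : (1 + 1 / k%:R) * (#|Cov R|%:R : rat) = #|Cov R|%:R + #|Cov R|%:R / k%:R.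
  by rewrite mulrDl mul1r mul1r mulrC.
rewrite e.
rewrite -(ler_nat rat) in hn; rewrite -(ler_nat rat) in hx.
rewrite natrD in hn.
have hD' : (#|A|%:R + #|Delta R Cstar|%:R : rat) = #|Cov R|%:R by rewrite -natrD hD.
move: H hn hx hD'.
set a := (#|A|%:R : rat). set c := (#|Cov R|%:R : rat). set q := c / k%:R.
lra.
Qed.
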